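(* Let $\mathscr{P}=(P^j_{B_1'B_2'})_{j=1}^d$ be a projective measurement on finite-dimensional $\mathcal{H}_{B_1'}\otimes\mathcal{H}_{B_2'}$ and $\mathscr{F}=(F^j_{B_1B_2})_{j=1}^d$ a POVM on finite-dimensional $\mathcal{H}_{B_1}\otimes\mathcal{H}_{B_2}$. Then $Q(\mathscr{F},\mathscr{P})\le1$, and if $Q(\mathscr{F},\mathscr{P})=1$ then there exist completely positive unital maps $\Lambda_{B_1}:\mathcal{L}(\mathcal{H}_{B_1})\to\mathcal{L}(\mathcal{H}_{B_1'})$, $\Lambda_{B_2}:\mathcal{L}(\mathcal{H}_{B_2})\to\mathcal{L}(\mathcal{H}_{B_2'})$ such that $(\Lambda_{B_1}\otimes\Lambda_{B_2})(F^j_{B_1B_2})=P^j_{B_1'B_2'}$ for every $j$.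
   Context: $Q(\mathscr{F},\mathscr{P}):=\frac{1}{|B_1'||B_2'|}\max_{\Lambda_{B_1},\Lambda_{B_2}}\sum_{j=1}^d\operatorname{tr}\big[(\Lambda_{B_1}\otimes\Lambda_{B_2})(F^j_{B_1B_2})P^j_{B_1'B_2'}\big]$, maximized over completely positive unital maps $\Lambda_{B_i}:\mathcal{L}(\mathcal{H}_{B_i})\to\mathcal{L}(\mathcal{H}_{B_i'})$; $|X|$ is the dimension of $\mathcal{H}_X$. *)

(* Defs.v *)
From HB Require Import structures.
From mathcomp Require Import all_boot all_order all_algebra.
Set Implicit Arguments. Unset Strict Implicit. Unset Printing Implicit Defensive.
Import Order.TTheory GRing.Theory Num.Theory.
Local Open Scope ring_scope.

Section QDefs.
Variable C : numClosedFieldType.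

Definition adjmx m n (A : 'M[C]_(m, n)) : 'M[C]_(n, m) :=
  (map_mx (fun x => x^*) A)^T.

Definition psdmx n (A : 'M[C]_n) : Prop :=
  forall v : 'cV[C]_n, 0 <= (adjmx v *m A *m v) 0 0.

(* Kronecker (tensor) product of matrices; the basis of H_1 (x) H_2 is
   indexed by mxvec_index i k : 'I_(m1 * m2). *)
Definition kronmx m1 n1 m2 n2 (A : 'M[C]_(m1, n1)) (B : 'M[C]_(m2, n2))
  : 'M[C]_(m1 * m2, n1 * n2) :=
  \sum_(i < m1) \sum_(j < n1) \sum_(k < m2) \sum_(l < n2)
     (A i j * B k l) *: delta_mx (mxvec_index i k) (mxvec_index j l).

(* (L1 (x) L2)(X), determined by linearity on the basis E_ij (x) E_kl *)
Definition tens_map m1 n1 m2 n2 (L1 : 'M[C]_m1 -> 'M[C]_n1)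
  (L2 : 'M[C]_m2 -> 'M[C]_n2) (X : 'M[C]_(m1 * m2)) : 'M[C]_(n1 * n2) :=
  \sum_(i < m1) \sum_(j < m1) \sum_(k < m2) \sum_(l < m2)
     X (mxvec_index i k) (mxvec_index j l) *:
       kronmx (L1 (delta_mx i j)) (L2 (delta_mx k l)).

Definition completely_positive m n (L : 'M[C]_m -> 'M[C]_n) : Prop :=
  forall (k : nat) (X : 'M[C]_(k * m)),
    psdmx X -> psdmx (tens_map (@id 'M[C]_k) L X).

Definition unital m n (L : 'M[C]_m -> 'M[C]_n) : Prop := L 1%:M = 1%:M.

Definition cp_unital m n (L : 'M[C]_m -> 'M[C]_n) : Prop :=
  completely_positive L /\ unital L.

Definition is_POVM n d (F : 'I_d -> 'M[C]_n) : Prop :=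
  (forall j, psdmx (F j)) /\ \sum_(j < d) F j = 1%:M.

Definition is_projective_measurement n d (P : 'I_d -> 'M[C]_n) : Prop :=
  (forall j, adjmx (P j) = P j /\ P j *m P j = P j) /\ \sum_(j < d) P j = 1%:M.

(* the objective of Q(F,P) for given maps L1, L2 *)
Definition Qval b1 b2 b1' b2' d (F : 'I_d -> 'M[C]_(b1 * b2))
  (P : 'I_d -> 'M[C]_(b1' * b2'))
  (L1 : 'M[C]_b1 -> 'M[C]_b1') (L2 : 'M[C]_b2 -> 'M[C]_b2') : C :=
  ((b1' * b2')%:R)^-1 * \sum_(j < d) \tr (tens_map L1 L2 (F j) *m P j).

End QDefs.

(* Main.v *)
Require Import Defs.
From HB Require Import structures.
From mathcomp Require Import all_boot all_order all_algebra.
From mathcomp Require Import ring.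
Import Order.TTheory GRing.Theory Num.Theory.
Local Open Scope ring_scope.

Module Helpers.
Set Implicit Arguments. Unset Strict Implicit. Unset Printing Implicit Defensive.
Section H.
Variable C : numClosedFieldType.

Lemma mxvec_index_inj m n (i j : 'I_m) (k l : 'I_n) :
  (mxvec_index i k == mxvec_index j l) = (i == j) && (k == l).
Proof.
apply/eqP/andP => [H|[/eqP-> /eqP->]] //.
have [g gK _] := @curry_mxvec_bij m n.
have := gK (i, k) isT; have := gK (j, l) isT => /= E1 E2.
by move: E2; rewrite H E1 => -[-> ->].
Qed.

Lemma sum_only (I : finType) (i0 : I) (F : I -> C) :
  (forall i, i != i0 -> F i = 0) -> \sum_i F i = F i0.
Proof. by move=> H; rewrite (bigD1 i0) //= big1 ?addr0 // => i /H. Qed.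

Lemma sum_mxvec m n (G : 'I_(m * n) -> C) :
  \sum_p G p = \sum_i \sum_k G (mxvec_index i k).
Proof.
rewrite (reindex (uncurry (@mxvec_index m n))) /=; last first.
  by apply: onW_bij; have [g g1 g2] := @curry_mxvec_bij m n; exists g => x; [apply: g1|apply: g2].
by rewrite pair_big /=; apply: eq_bigr => -[].
Qed.

Lemma kronE m1 n1 m2 n2 (A : 'M[C]_(m1, n1)) (B : 'M[C]_(m2, n2)) i j k l :
  kronmx A B (mxvec_index i k) (mxvec_index j l) = A i j * B k l.
Proof.
rewrite /kronmx summxE (sum_only (i0:=i)) => [|a ia]; last first.
  rewrite eq_sym in ia.
  rewrite summxE big1 // => b _; rewrite summxE big1 // => c _; rewrite summxE big1 // => e _.
  by rewrite !mxE !mxvec_index_inj (negbTE ia) mulr0.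
rewrite summxE (sum_only (i0:=j)) => [|b jb]; last first.
  rewrite eq_sym in jb.
  rewrite summxE big1 // => c _; rewrite summxE big1 // => e _.
  by rewrite !mxE !mxvec_index_inj (negbTE jb) /= andbF mulr0.
rewrite summxE (sum_only (i0:=k)) => [|c kc]; last first.
  rewrite eq_sym in kc.
  rewrite summxE big1 // => e _.
  by rewrite !mxE !mxvec_index_inj (negbTE kc) /= andbF mulr0.
rewrite summxE (sum_only (i0:=l)) => [|e le]; last first.
  rewrite eq_sym in le.
  by rewrite !mxE !mxvec_index_inj (negbTE le) /= !andbF mulr0.
by rewrite !mxE !eqxx mulr1.
Qed.

Lemma tensE m1 n1 m2 n2 (L1 : 'M[C]_m1 -> 'M[C]_n1) (L2 : 'M[C]_m2 -> 'M[C]_n2) X i' j' k' l' :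
  tens_map L1 L2 X (mxvec_index i' k') (mxvec_index j' l') =
  \sum_i \sum_j \sum_k \sum_l X (mxvec_index i k) (mxvec_index j l) *
      (L1 (delta_mx i j) i' j' * L2 (delta_mx k l) k' l').
Proof.
rewrite /tens_map summxE; apply: eq_bigr => i _; rewrite summxE; apply: eq_bigr => j _.
rewrite summxE; apply: eq_bigr => k _; rewrite summxE; apply: eq_bigr => l _.
by rewrite mxE kronE.
Qed.


Lemma exch4 (I J K L T : finType) (G : T -> I -> J -> K -> L -> C) :
  \sum_t \sum_i \sum_j \sum_k \sum_l G t i j k l =
  \sum_i \sum_j \sum_k \sum_l \sum_t G t i j k l.
Proof.
rewrite exchange_big; apply: eq_bigr => i _; rewrite exchange_big; apply: eq_bigr => j _.
rewrite exchange_big; apply: eq_bigr => k _; rewrite exchange_big; apply: eq_bigr => l _ //.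
Qed.

Lemma tens_sum m1 n1 m2 n2 (L1 : 'M[C]_m1 -> 'M[C]_n1) (L2 : 'M[C]_m2 -> 'M[C]_n2)
   d (F : 'I_d -> 'M[C]_(m1 * m2)) :
  \sum_t tens_map L1 L2 (F t) = tens_map L1 L2 (\sum_t F t).
Proof.
apply/matrixP => p q; case/mxvec_indexP: p => i' k'; case/mxvec_indexP: q => j' l'.
rewrite summxE; under eq_bigr do rewrite tensE.
rewrite tensE exch4; apply: eq_bigr => i _; apply: eq_bigr => j _; apply: eq_bigr => k _;
  apply: eq_bigr => l _.
by rewrite summxE mulr_suml.
Qed.

Lemma tens_unital m1 n1 m2 n2 (L1 : {linear 'M[C]_m1 -> 'M[C]_n1})
   (L2 : {linear 'M[C]_m2 -> 'M[C]_n2}) :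
  unital L1 -> unital L2 -> tens_map L1 L2 1%:M = 1%:M.
Proof.
move=> U1 U2.
apply/matrixP => p q; case/mxvec_indexP: p => i' k'; case/mxvec_indexP: q => j' l'.
rewrite tensE.
have E : forall i k, \sum_j \sum_l (1%:M : 'M[C]_(m1 * m2)) (mxvec_index i k) (mxvec_index j l) *
      (L1 (delta_mx i j) i' j' * L2 (delta_mx k l) k' l') =
      L1 (delta_mx i i) i' j' * L2 (delta_mx k k) k' l'.
  move=> i k; rewrite (sum_only (i0:=i)) => [|j ji]; last first.
    by apply: big1 => l _; rewrite mxE mxvec_index_inj eq_sym (negbTE ji) mul0r.
  rewrite (sum_only (i0:=k)) => [|l lk]; last first.
    by rewrite mxE mxvec_index_inj [k == l]eq_sym (negbTE lk) andbF mul0r.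
  by rewrite mxE eqxx mul1r.
under eq_bigr do rewrite exchange_big /= ; under eq_bigr do under eq_bigr do rewrite E.
rewrite [RHS]mxE mxvec_index_inj.
have -> : ((i' == j') && (k' == l'))%:R = (1%:M : 'M[C]_n1) i' j' * (1%:M : 'M[C]_n2) k' l'.
  by rewrite !mxE -natrM mulnb.
rewrite -U1 -U2 (mx1_sum_delta C m1) (mx1_sum_delta C m2) !linear_sum !summxE mulr_suml.
by apply: eq_bigr => i _; rewrite mulr_sumr.
Qed.

Definition unidx m n (p : 'I_(m * n)) : 'I_m * 'I_n :=
  enum_val (cast_ord (esym (mxvec_cast m n)) p).

Lemma unidxK m n (i : 'I_m) (k : 'I_n) : unidx (mxvec_index i k) = (i, k).
Proof. by rewrite /unidx cast_ordK enum_rankK. Qed.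

Definition sw m n (p : 'I_(n * m)) : 'I_(m * n) := mxvec_index (unidx p).2 (unidx p).1.

Lemma swE m n (i : 'I_m) (k : 'I_n) : sw (mxvec_index k i) = mxvec_index i k.
Proof. by rewrite /sw unidxK. Qed.

Definition swapmx m n (Y : 'M[C]_(m * n)) : 'M[C]_(n * m) :=
  \matrix_(p, q) Y (sw p) (sw q).

Lemma qfE n (v w : 'cV[C]_n) (A : 'M[C]_n) :
  (adjmx v *m A *m w) 0 0 = \sum_a \sum_b (v a 0)^* * A a b * w b 0.
Proof.
rewrite mxE [RHS]exchange_big; apply: eq_bigr => b _; rewrite mxE mulr_suml; apply: eq_bigr => a _.
by rewrite !mxE.
Qed.

Lemma psd_swap m n (Y : 'M[C]_(m * n)) : psdmx Y -> psdmx (swapmx Y).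
Proof.
move=> HY v; pose w : 'cV[C]_(m * n) := \col_p v (sw p) 0.
suff -> : (adjmx v *m swapmx Y *m v) 0 0 = (adjmx w *m Y *m w) 0 0 by apply: HY.
rewrite !qfE sum_mxvec [RHS]sum_mxvec exchange_big /=.
apply: eq_bigr => i _; apply: eq_bigr => k _.
rewrite sum_mxvec [RHS]sum_mxvec exchange_big /=.
apply: eq_bigr => j _; apply: eq_bigr => l _.
by rewrite !mxE !swE.
Qed.

Lemma tens_decomp m1 n1 m2 n2 (L1 : 'M[C]_m1 -> 'M[C]_n1) (L2 : 'M[C]_m2 -> 'M[C]_n2) X :
  tens_map L1 L2 X =
  swapmx (tens_map (@id 'M[C]_n2) L1 (swapmx (tens_map (@id 'M[C]_m1) L2 X))).
Proof.
apply/matrixP => p q; case/mxvec_indexP: p => i' k'; case/mxvec_indexP: q => j' l'.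
rewrite mxE !swE [RHS]tensE.
rewrite (sum_only (i0:=k')) => [|a ak]; last first.
  apply: big1 => b _; apply: big1 => c _; apply: big1 => e _.
  by rewrite [delta_mx a b _ _]mxE eq_sym (negbTE ak) mul0r mulr0.
rewrite (sum_only (i0:=l')) => [|b bl]; last first.
  apply: big1 => c _; apply: big1 => e _.
  by rewrite [delta_mx k' b _ _]mxE [l' == b]eq_sym (negbTE bl) andbF mul0r mulr0.
have E : forall c e, swapmx (tens_map id L2 X) (mxvec_index k' c) (mxvec_index l' e) =
   \sum_k \sum_l X (mxvec_index c k) (mxvec_index e l) * L2 (delta_mx k l) k' l'.
  move=> c e; rewrite mxE !swE tensE.
  rewrite (sum_only (i0:=c)) => [|a ac]; last first.
    apply: big1 => b _; apply: big1 => k _; apply: big1 => l _.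
    by rewrite [delta_mx a b _ _]mxE eq_sym (negbTE ac) mul0r mulr0.
  rewrite (sum_only (i0:=e)) => [|b be]; last first.
    apply: big1 => k _; apply: big1 => l _.
    by rewrite [delta_mx c b _ _]mxE [e == b]eq_sym (negbTE be) andbF mul0r mulr0.
  apply: eq_bigr => k _; apply: eq_bigr => l _.
  by rewrite [delta_mx c e _ _]mxE !eqxx mul1r.
rewrite tensE; apply: eq_bigr => i _; apply: eq_bigr => j _.
rewrite E [delta_mx k' l' _ _]mxE !eqxx mul1r mulr_suml.
apply: eq_bigr => k _; rewrite mulr_suml; apply: eq_bigr => l _.
ring.
Qed.

Lemma tens_psd m1 n1 m2 n2 (L1 : 'M[C]_m1 -> 'M[C]_n1) (L2 : 'M[C]_m2 -> 'M[C]_n2) X :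
  completely_positive L1 -> completely_positive L2 -> psdmx X -> psdmx (tens_map L1 L2 X).
Proof.
move=> c1 c2 hX; rewrite tens_decomp; apply: psd_swap; apply: c1; apply: psd_swap; exact: c2.
Qed.

Definition qf n (A : 'M[C]_n) (v w : 'cV[C]_n) := (adjmx v *m A *m w) 0 0.

Lemma adjmxD m n (A B : 'M[C]_(m, n)) : adjmx (A + B) = adjmx A + adjmx B.
Proof. by apply/matrixP => i j; rewrite !mxE rmorphD. Qed.

Lemma adjmxZ m n (a : C) (A : 'M[C]_(m, n)) : adjmx (a *: A) = a^* *: adjmx A.
Proof. by apply/matrixP => i j; rewrite !mxE rmorphM. Qed.

Lemma adjmxM m n p (A : 'M[C]_(m, n)) (B : 'M[C]_(n, p)) :
  adjmx (A *m B) = adjmx B *m adjmx A.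
Proof. by rewrite /adjmx map_mxM trmx_mul. Qed.

Lemma adjmxK m n (A : 'M[C]_(m, n)) : adjmx (adjmx A) = A.
Proof. by apply/matrixP => i j; rewrite !mxE conjCK. Qed.

Lemma qf_expand n (A : 'M[C]_n) u w t :
  qf A (u + t *: w) (u + t *: w) =
  qf A u u + t^* * qf A w u + t * qf A u w + t^* * t * qf A w w.
Proof.
rewrite /qf adjmxD adjmxZ !mulmxDl !mulmxDr -!scalemxAl -!scalemxAr !mxE.
ring.
Qed.

Lemma quad0 (x c : C) : 0 <= c ->
  (forall s : C, s \is Num.real -> 0 <= s * x + s ^+ 2 * c) -> x = 0.
Proof.
move=> c0 H.
have cr : c \is Num.real by apply: ger0_real.
have xr : x \is Num.real.
  have := H 1 (real1 C); rewrite mul1r expr1n mul1r => /ger0_real hr.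
  by have := rpredB hr cr; rewrite addrK.
have c1 : 0 < c + 1 by apply: ltr_wpDl.
have c1n : c + 1 != 0 by rewrite gt_eqF.
pose s := - x / (c + 1).
have sr : s \is Num.real by rewrite /s rpredM ?rpredN // rpredV rpredD ?(real1 C).
have := H s sr.
have -> : s * x + s ^+ 2 * c = - (x ^+ 2 / (c + 1) ^+ 2) by rewrite /s; field.
rewrite oppr_ge0 => h1.
have h2 : 0 <= x ^+ 2 / (c + 1) ^+ 2.
  apply: mulr_ge0; first exact: real_exprn_even_ge0.
  by rewrite invr_ge0 exprn_ge0 // ltW.
have /eqP : x ^+ 2 / (c + 1) ^+ 2 = 0 by apply/le_anti; rewrite h1 h2.
by rewrite mulf_eq0 invr_eq0 !expf_eq0 /= (negbTE c1n) orbF => /eqP.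
Qed.

Lemma psd_null n (A : 'M[C]_n) u : psdmx A -> qf A u u = 0 -> A *m u = 0.
Proof.
move=> hA hu.
have key : forall w, qf A w u = 0.
  move=> w.
  pose a := qf A w u; pose b := qf A u w; pose c := qf A w w.
  have c0 : 0 <= c by apply: hA.
  have E1 : a + b = 0.
    apply: (quad0 c0) => s sr.
    have := hA (u + s *: w); rewrite -/(qf A _ _) qf_expand hu (conj_Creal sr).
    by congr (_ <= _); rewrite /a /b /c; ring.
  have E2 : 'i * (b - a) = 0.
    apply: (quad0 c0) => s sr.
    have cs : (s * 'i)^* = - (s * 'i) by rewrite rmorphM /= conjCi (conj_Creal sr) mulrN.
    have := hA (u + (s * 'i) *: w); rewrite -/(qf A _ _) qf_expand hu cs.
    congr (_ <= _); rewrite /a /b /c.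
    have ii : 'i * 'i = -1 :> C by rewrite -expr2 sqrCi.
    have -> : - (s * 'i) * (s * 'i) * qf A w w = - (s ^+ 2 * qf A w w) * ('i * 'i) by ring.
    rewrite ii; ring.
  move/eqP: E2; rewrite mulf_eq0 (negbTE (neq0Ci C)) /= subr_eq0 => /eqP ba.
  move/eqP: E1; rewrite ba -mulr2n -mulr_natr mulf_eq0 pnatr_eq0 orbF => /eqP.
  done.
apply/matrixP => r z; rewrite (ord1 z) [RHS]mxE -(key (delta_mx r 0)) /qf qfE mxE.
rewrite [RHS](sum_only (i0:=r)) => [|a ar]; last first.
  by apply: big1 => b _; rewrite !mxE (negbTE ar) conjC0 !mul0r.
by apply: eq_bigr => b _; rewrite !mxE !eqxx conjC1 mul1r.
Qed.

Lemma trE n (A Q : 'M[C]_n) : adjmx Q = Q -> Q *m Q = Q ->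
  \tr (A *m Q) = \sum_i qf A (col i (adjmx Q)) (col i (adjmx Q)).
Proof.
move=> hQ iQ.
have -> : A *m Q = A *m (adjmx Q *m Q) by rewrite hQ iQ.
rewrite mulmxA mxtrace_mulC; apply: eq_bigr => i _.
rewrite /qf qfE mxE; apply: eq_bigr => a _; rewrite mxE mulr_sumr; apply: eq_bigr => b _.
by rewrite !mxE conjCK mulrA.
Qed.

Lemma tr_ge0 n (A Q : 'M[C]_n) : psdmx A -> adjmx Q = Q -> Q *m Q = Q ->
  0 <= \tr (A *m Q).
Proof. by move=> hA hQ iQ; rewrite trE // sumr_ge0 // => i _; apply: hA. Qed.

Lemma tr_eq0 n (A Q : 'M[C]_n) : psdmx A -> adjmx Q = Q -> Q *m Q = Q ->
  \tr (A *m Q) = 0 -> A *m Q = 0.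
Proof.
move=> hA hQ iQ; rewrite trE // => h0.
have hz := psumr_eq0P (fun i _ => hA (col i (adjmx Q))) h0.
apply/matrixP => r i.
have := psd_null hA (hz i isT) => /matrixP /(_ r 0).
move=> h; transitivity ((A *m col i (adjmx Q)) r 0); last by rewrite h !mxE.
by rewrite -[in LHS]hQ !mxE; apply: eq_bigr => b _; rewrite !mxE.
Qed.

Lemma proj_psd n (P : 'M[C]_n) : adjmx P = P -> P *m P = P -> psdmx P.
Proof.
move=> hP iP v.
have -> : adjmx v *m P *m v = adjmx (P *m v) *m (P *m v).
  by rewrite adjmxM hP -mulmxA -[in LHS]iP !mulmxA.
rewrite mxE sumr_ge0 // => i _; rewrite !mxE mulrC mul_conjC_ge0 //.
Qed.

Lemma proj_compl n (P : 'M[C]_n) : adjmx P = P -> P *m P = P ->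
  adjmx (1%:M - P) = 1%:M - P /\ (1%:M - P) *m (1%:M - P) = 1%:M - P.
Proof.
move=> hP iP; split.
  apply/matrixP => i j; move/matrixP: hP => /(_ i j); rewrite !mxE => <-.
  by rewrite rmorphB rmorph_nat eq_sym.
by rewrite mulmxBl !mulmxBr !mul1mx mulmx1 iP subrr subr0.
Qed.

End H.

End Helpers.
Import Helpers.

Theorem mainTheorem5 (C : numClosedFieldType) (b1 b2 b1' b2' d : nat)
  (F : 'I_d -> 'M[C]_(b1 * b2)) (P : 'I_d -> 'M[C]_(b1' * b2')) :
  is_projective_measurement P -> is_POVM F ->
  (forall (L1 : {linear 'M[C]_b1 -> 'M[C]_b1'})
          (L2 : {linear 'M[C]_b2 -> 'M[C]_b2'}),
      cp_unital L1 -> cp_unital L2 -> Qval F P L1 L2 <= 1) /\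
  ((exists (L1 : {linear 'M[C]_b1 -> 'M[C]_b1'})
           (L2 : {linear 'M[C]_b2 -> 'M[C]_b2'}),
      cp_unital L1 /\ cp_unital L2 /\ Qval F P L1 L2 = 1) ->
   exists (L1 : {linear 'M[C]_b1 -> 'M[C]_b1'})
          (L2 : {linear 'M[C]_b2 -> 'M[C]_b2'}),
      cp_unital L1 /\ cp_unital L2 /\
      forall j, tens_map L1 L2 (F j) = P j).
Proof.
move=> [hP sP] [hF sF].
have key : forall (L1 : {linear 'M[C]_b1 -> 'M[C]_b1'})
          (L2 : {linear 'M[C]_b2 -> 'M[C]_b2'}),
      cp_unital L1 -> cp_unital L2 ->
      let A := fun j => tens_map L1 L2 (F j) in
      let T := \sum_j \tr (A j *m (1%:M - P j)) in
      [/\ forall j, psdmx (A j), \sum_j A j = 1%:M, 0 <= T,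
          (forall j, 0 <= \tr (A j *m (1%:M - P j))) &
          Qval F P L1 L2 = ((b1' * b2')%:R)^-1 * ((b1' * b2')%:R - T)].
  move=> L1 L2 [c1 u1] [c2 u2] A T.
  have psdA : forall j, psdmx (A j) by move=> j; apply: tens_psd => //; apply: hF.
  have sA : \sum_j A j = 1%:M by rewrite /A tens_sum sF tens_unital.
  have ge : forall j, 0 <= \tr (A j *m (1%:M - P j)).
    move=> j; have [h1 h2] := proj_compl (hP j).1 (hP j).2; exact: tr_ge0.
  split => //; first by apply: sumr_ge0 => j _.
  rewrite /Qval; congr (_ * _).
  have -> : T = \sum_j (\tr (A j) - \tr (A j *m P j)).
    by apply: eq_bigr => j _; rewrite mulmxBr mulmx1 linearB.
  have trA : \sum_j \tr (A j) = (b1' * b2')%:R by rewrite -linear_sum /= sA mxtrace1.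
  by rewrite sumrB trA opprB addrC subrK.
split.
  move=> L1 L2 h1 h2; have [_ _ T0 _ ->] := key L1 L2 h1 h2.
  have [->|n0] := eqVneq ((b1' * b2')%:R : C) 0; first by rewrite invr0 mul0r ler01.
  by rewrite mulrBr mulVf // gerBl mulr_ge0 // invr_ge0 ler0n.
move=> [L1 [L2 [h1 [h2 hQ]]]]; exists L1, L2; split; first exact: h1; split; first exact: h2.
have [psdA sA T0 geT hQ'] := key L1 L2 h1 h2.
set A := fun j => tens_map L1 L2 (F j) in psdA sA T0 geT hQ' *.
have n0 : ((b1' * b2')%:R : C) != 0.
  by apply/eqP => n0; move: hQ'; rewrite hQ n0 invr0 mul0r => /eqP; rewrite oner_eq0.
move: hQ'; rewrite hQ mulrBr mulVf // => /eqP.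
rewrite eq_sym subr_eq addrC -subr_eq subrr eq_sym mulf_eq0 invr_eq0 (negbTE n0) /= => /eqP T00.
have hz := psumr_eq0P (fun j _ => geT j) T00.
have AP : forall j, A j *m P j = A j.
  move=> j; have [h3 h4] := proj_compl (hP j).1 (hP j).2.
  have := tr_eq0 (psdA j) h3 h4 (hz j isT).
  by rewrite mulmxBr mulmx1 => /eqP; rewrite subr_eq0 => /eqP.
have orth : forall j k, j != k -> P j *m P k = 0.
  move=> j k jk.
  have ge : forall i, 0 <= \tr (P i *m P k).
    by move=> i; apply: tr_ge0; [apply: proj_psd; [exact: (hP i).1|exact: (hP i).2]|exact: (hP k).1|exact: (hP k).2].
  have s0 : \sum_(i | i != k) \tr (P i *m P k) = 0.
    have := congr1 (fun M => \tr (M *m P k)) sP.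
    rewrite /= mulmx_suml linear_sum /= (bigD1 k) //= mul1mx (hP k).2.
    by move=> h; apply: (addrI (\tr (P k))); rewrite h addr0.
  have := psumr_eq0P (fun i _ => ge i) s0 jk.
  apply: tr_eq0; [apply: proj_psd; [exact: (hP j).1|exact: (hP j).2]|exact: (hP k).1|exact: (hP k).2].
move=> k.
rewrite -/(A k) -[RHS]mul1mx -sA mulmx_suml (bigD1 k) //= AP.
rewrite big1 ?addr0 // => j jk.
by rewrite -/(A j) -(AP j) -mulmxA orth ?mulmx0.
Qed.
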